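(* Let $p \geq q$ and $n \geq 1$ be positive integers and let $B$ be a $p \times q$ matrix. Let $C$ be the $(nq+p)\times(nq+p)$ block matrix $$C=\begin{bmatrix} 0 & B & B & \cdots & B\\ B^T & 0 & 0 & \cdots & 0\\ B^T & 0 & 0 & \cdots & 0\\ \vdots & \vdots & \vdots & \ddots & \vdots\\ B^T & 0 & 0 & \cdots & 0\end{bmatrix},$$ with one block row/column of size $p$ followed by $n$ block rows/columns of size $q$ (so $B$ appears $n$ times in the first block row and $B^T$ appears $n$ times in the first block column). Let $D$ be the $(np+q)\times(np+q)$ block matrix $$D=\begin{bmatrix} 0 & B^T & B^T & \cdots & B^T\\ B & 0 & 0 & \cdots & 0\\ B & 0 & 0 & \cdots & 0\\ \vdots & \vdots & \vdots & \ddots & \vdots\\ B & 0 & 0 & \cdots & 0\end{bmatrix},$$ with one block row/column of size $q$ followed by $n$ block rows/columns of size $p$. Then $D$ and $C \oplus 0_{(n-1)(p-q)}$ are cospectral.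
   Context: For matrices $X,Y$, $X\oplus Y$ denotes the block diagonal matrix $\begin{bmatrix} X&0\\0&Y\end{bmatrix}$; $0_m$ is the $m\times m$ zero matrix, and $0$ denotes a zero matrix of appropriate size. Two square matrices are cospectral if they have the same eigenvalues with the same multiplicities (i.e. the same characteristic polynomial). *)

(* Defs.v *)
From HB Require Import structures.
From mathcomp Require Import all_boot all_order all_algebra.
Set Implicit Arguments. Unset Strict Implicit. Unset Printing Implicit Defensive.
Import GRing.Theory.
Local Open Scope ring_scope.

(* tile_mx q n : the q x (n*q) matrix [I_q I_q ... I_q] (n copies of I_q):
   entry (i, j) is 1 iff i = j mod q. *)
Definition tile_mx (R : nzRingType) (q n : nat) : 'M[R]_(q, n * q) :=
  \matrix_(i < q, j < n * q) ((nat_of_ord i == (nat_of_ord j %% q)%N)%:R : R).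

(* hub_mx B n = [[0, B B ... B], [B^T; 0], ..., [B^T; 0]] with n copies of B,
   for B : 'M_(p, q); a square matrix of size p + n*q. *)
Definition hub_mx (R : nzRingType) (p q n : nat) (B : 'M[R]_(p, q))
  : 'M[R]_(p + n * q) :=
  block_mx 0 (B *m tile_mx R q n) (B *m tile_mx R q n)^T 0.

Definition cospectral (R : comNzRingType) (m k : nat)
  (A : 'M[R]_m) (A' : 'M[R]_k) : Prop := char_poly A = char_poly A'.

(* Main.v *)
Require Import Defs.
From mathcomp Require Import all_boot all_order all_algebra.
From mathcomp Require Import ring zify.
Set Implicit Arguments. Unset Strict Implicit. Unset Printing Implicit Defensive.
Import GRing.Theory.
Local Open Scope ring_scope.

Lemma key1 (R : comNzRingType) (a b : nat) (t : R) (Y : 'M[R]_(a, b)) (Z : 'M[R]_(b, a)) :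
  t ^+ (a + b) * \det (block_mx t%:M Y Z t%:M) = t ^+ (2 * b) * \det ((t * t)%:M - Y *m Z).
Proof.
have E : block_mx t%:M Y Z t%:M *m block_mx t%:M 0 (- Z) t%:M
   = block_mx ((t * t)%:M - Y *m Z) (t *: Y) 0 (t * t)%:M.
  rewrite mulmx_block !mul_scalar_mx !mul_mx_scalar !mulmx0 ?addr0 ?add0r !scale_scalar_mx.
  by rewrite mulmxN scaler0 add0r scalerN subrr.
have := congr1 determinant E.
rewrite det_mulmx det_ublock det_lblock !det_scalar => H.
by rewrite exprD mulrC H mulrC -expr2 -exprM mulnC.
Qed.

Lemma key2 (R : comNzRingType) (a b : nat) (t : R) (Y : 'M[R]_(a, b)) (Z : 'M[R]_(b, a)) :
  t ^+ (a + b) * \det (block_mx t%:M Y Z t%:M) = t ^+ (2 * a) * \det ((t * t)%:M - Z *m Y).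
Proof.
have E : block_mx t%:M Y Z t%:M *m block_mx t%:M (- Y) 0 t%:M
   = block_mx (t * t)%:M 0 (t *: Z) ((t * t)%:M - Z *m Y).
  rewrite mulmx_block !mul_scalar_mx !mul_mx_scalar !mulmx0 ?addr0 ?add0r !scale_scalar_mx.
  by rewrite mulmxN scaler0 addr0 scalerN addNr addrC.
have := congr1 determinant E.
rewrite det_mulmx det_ublock det_lblock !det_scalar => H.
by rewrite exprD mulrC H -expr2 -exprM mulnC.
Qed.
Lemma tile_sum (R : nzRingType) (q n : nat) (i j : nat) : (i < q)%N -> (j < q)%N ->
  \sum_(0 <= k < n * q) ((i == (k %% q)%N)%:R * (j == (k %% q)%N)%:R : R) = ((i == j)%:R *+ n).
Proof.
move=> iq jq; elim: n => [|n IH]; first by rewrite mul0n big_geq.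
rewrite mulSn (big_cat_nat _ (leq_addr _ _)) //=.
have -> : \sum_(q <= k < q + n * q) ((i == (k %% q)%N)%:R * (j == (k %% q)%N)%:R : R)
   = \sum_(0 <= k < n * q) ((i == (k %% q)%N)%:R * (j == (k %% q)%N)%:R : R).
  rewrite -{1}(add0n q) big_addn addKn; apply: eq_bigr => k _; by rewrite modnDr.
rewrite IH mulrS; congr (_ + _).
rewrite (@eq_big_nat _ _ _ _ _ _ (fun k => if k == i then (j == i)%:R else 0)); last first.
  move=> k /andP [_ kq]; rewrite modn_small // eq_sym.
  by case: eqP => [->|_]; rewrite ?mul1r ?mul0r.
by rewrite -big_mkcond big_nat1_eq iq eq_sym.
Qed.

Lemma tile_tile (R : nzRingType) (q n : nat) :
  tile_mx R q n *m (tile_mx R q n)^T = (n%:R : R)%:M.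
Proof.
apply/matrixP => i j; rewrite !mxE.
under eq_bigr => k _ do rewrite !mxE.
rewrite -(big_mkord xpredT (fun k => (nat_of_ord i == (k %% q)%N)%:R * (nat_of_ord j == (k %% q)%N)%:R)).
rewrite tile_sum //; case: eqP => [/val_inj ->|ne]; rewrite ?eqxx ?mulr1n //.
have ne2 : (i == j) = false by apply/eqP => e; apply: ne; rewrite e.
by rewrite ne2 mulr0n /= mul0rn.
Qed.

Lemma char_hub (R : comNzRingType) (a b : nat) (X : 'M[R]_(a, b)) :
  'X ^+ (a + b) * char_poly (block_mx 0 X X^T 0)
  = 'X ^+ (2 * b) * \det (('X * 'X)%:M - map_mx polyC (X *m X^T)).
Proof.
rewrite /char_poly /char_poly_mx map_block_mx (scalar_mx_block a b) opp_block_mx add_block_mx.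
rewrite !map_mx0 !oppr0 !addr0 !add0r -map_trmx.
rewrite key1 map_mxM mulmxN mulNmx opprK map_trmx.
done.
Qed.

Lemma gram (R : comNzRingType) (a c n : nat) (X : 'M[R]_(a, c)) :
  (X *m tile_mx R c n) *m (X *m tile_mx R c n)^T = (n%:R : R) *: (X *m X^T).
Proof.
by rewrite trmx_mul mulmxA -(mulmxA X) tile_tile mul_mx_scalar scalemxAl.
Qed.

Lemma char_blk0 (R : comNzRingType) (a k : nat) (A : 'M[R]_a) :
  char_poly (block_mx A 0 0 (0 : 'M[R]_k)) = char_poly A * 'X ^+ k.
Proof.
by rewrite /char_poly char_block_diag_mx det_ublock /char_poly_mx map_mx0 subr0 det_scalar.
Qed.

Lemma expo (p q n : nat) : (q <= p)%N -> (1 <= n)%N ->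
  (p + n * q + 2 * (n * p) + 2 * q = q + n * p + 2 * p + (n - 1) * (p - q) + 2 * (n * q))%N.
Proof.
move=> qp n1; rewrite -(subnK qp) -(subnK n1).
set d := (p - q)%N; set m := (n - 1)%N.
rewrite addnK. nia.
Qed.

Theorem theorem3p2 (R : fieldType) (p q n : nat) (B : 'M[R]_(p, q)) :
  (0 < q)%N -> (q <= p)%N -> (1 <= n)%N ->
  cospectral (hub_mx n B^T)
    (block_mx (hub_mx n B) 0 0 (0 : 'M[R]_((n - 1) * (p - q)))).
Proof.
move=> q0 qp n1; rewrite /cospectral char_blk0 /hub_mx.
have H1 := char_hub (B^T *m tile_mx R p n); rewrite gram trmxK in H1.
have H2 := char_hub (B *m tile_mx R q n); rewrite gram in H2.
have H3 := key1 'X (map_mx polyC ((n%:R : R) *: B^T)) (map_mx polyC B).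
rewrite key2 -!map_mxM -scalemxAl -scalemxAr in H3.
set x : {poly R} := 'X in H1 H2 H3 *.
set cD := char_poly _ in H1 *.
set cC := char_poly _ in H2 *.
set dq := \det _ in H1.
set dp := \det _ in H2.
have xn0 : forall k, x ^+ k != 0 by move=> k; rewrite expf_neq0 // polyX_eq0.
apply: (mulfI (xn0 ((q + n * p) + (p + n * q) + 2 * p)%N)).
rewrite -/dp -/dq in H3.
have -> : x ^+ (q + n * p + (p + n * q) + 2 * p) * cD
  = x ^+ (p + n * q) * x ^+ (2 * p) * (x ^+ (q + n * p) * cD) by rewrite !exprD; ring.
rewrite H1.
have -> : x ^+ (p + n * q) * x ^+ (2 * p) * (x ^+ (2 * (n * p)) * dq)
  = x ^+ (p + n * q) * x ^+ (2 * (n * p)) * (x ^+ (2 * p) * dq) by ring.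
rewrite -H3.
have -> : x ^+ (q + n * p + (p + n * q) + 2 * p) * (cC * x ^+ ((n - 1) * (p - q)))
  = x ^+ (q + n * p) * x ^+ (2 * p) * x ^+ ((n - 1) * (p - q)) * (x ^+ (p + n * q) * cC)
  by rewrite !exprD; ring.
rewrite H2 !mulrA -!exprD.
by rewrite expo.
Qed.
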